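(* For every 3-periodic of the elliptic billiard, the interior angles $\theta_i'$ of its outer triangle satisfy $$\sum_{i=1}^3\cos(2\theta_i')=\frac{(a^2+b^2)(a^2+b^2-2\delta)}{c^4}=3-JL,\qquad \delta=\sqrt{a^4-a^2b^2+b^4}.$$
   Context: The elliptic billiard is $\mathcal{E}: x^2/a^2+y^2/b^2=1$, $a>b>0$, $c=\sqrt{a^2-b^2}$. A 3-periodic is a triangle $P_1P_2P_3$ inscribed in $\mathcal{E}$ that is a closed billiard trajectory (at each vertex the normal to $\mathcal{E}$ bisects the angle between the two incident sides). Its outer triangle has as sides the tangent lines to $\mathcal{E}$ at $P_1,P_2,P_3$. $L$ is the perimeter (the same for all 3-periodics), $J$ is Joachimsthal's constant $J=\frac12\nabla f(P_i)\cdot\hat v>0$ ($f=x^2/a^2+y^2/b^2$, $\hat v$ unit direction of the trajectory at $P_i$); explicitly $J=\sqrt{2\delta-a^2-b^2}/c^2$ and $L=2(\delta+a^2+b^2)J$. *)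

(* Defs.v *)
From Stdlib Require Import Reals.
Open Scope R_scope.

Definition pt := (R * R)%type.

Definition dot (u v : pt) : R := fst u * fst v + snd u * snd v.
Definition vsub (u v : pt) : pt := (fst u - fst v, snd u - snd v).
Definition vadd (u v : pt) : pt := (fst u + fst v, snd u + snd v).
Definition vscale (k : R) (u : pt) : pt := (k * fst u, k * snd u).
Definition norm (u : pt) : R := sqrt (dot u u).
Definition dist (P Q : pt) : R := norm (vsub P Q).
Definition udir (P Q : pt) : pt := vscale (/ dist Q P) (vsub Q P).

Definition ell_f (a b : R) (P : pt) : R := fst P ^ 2 / a ^ 2 + snd P ^ 2 / b ^ 2.
Definition ell_grad (a b : R) (P : pt) : pt := (2 * fst P / a ^ 2, 2 * snd P / b ^ 2).
Definition on_ellipse (a b : R) (P : pt) : Prop := ell_f a b P = 1.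

Definition ell_tangent (a b : R) (P : pt) : pt := (- snd P / b ^ 2, fst P / a ^ 2).

(* Reflection law at vertex P with neighbours Pm, Pp: the normal to the
   ellipse at P bisects the angle between the sides P Pm and P Pp, i.e. the sum
   of the two unit side vectors is normal to the ellipse (orthogonal to the tangent). *)
Definition billiard_reflection (a b : R) (Pm P Pp : pt) : Prop :=
  dot (vadd (udir P Pm) (udir P Pp)) (ell_tangent a b P) = 0.

Definition three_periodic (a b : R) (P1 P2 P3 : pt) : Prop :=
  on_ellipse a b P1 /\ on_ellipse a b P2 /\ on_ellipse a b P3 /\
  P1 <> P2 /\ P2 <> P3 /\ P3 <> P1 /\
  billiard_reflection a b P3 P1 P2 /\
  billiard_reflection a b P1 P2 P3 /\
  billiard_reflection a b P2 P3 P1.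

Definition on_tangent_line (a b : R) (P Q : pt) : Prop :=
  fst P * fst Q / a ^ 2 + snd P * snd Q / b ^ 2 = 1.

Definition interior_angle (A B C : pt) : R :=
  acos (dot (vsub B A) (vsub C A) / (norm (vsub B A) * norm (vsub C A))).

Definition perimeter (P1 P2 P3 : pt) : R := dist P1 P2 + dist P2 P3 + dist P3 P1.

(* Joachimsthal's constant J = 1/2 grad f(P1) . v, v the unit direction of the
   trajectory at P1 (arriving from P3, travelling P3 -> P1 -> P2). *)
Definition joachimsthal (a b : R) (P1 P2 P3 : pt) : R :=
  / 2 * dot (ell_grad a b P1) (udir P3 P1).

(* Main.v *)
Require Import Defs.
From Stdlib Require Import Reals Lra Psatz.
Open Scope R_scope.

Lemma crossid (ax ay bx BY zx zy : R) :
  (ax*BY-ay*bx)*(zx*zx+zy*zy) =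
  (ax*zx+ay*zy)*(zx*BY-zy*bx) - (zx*ay-zy*ax)*(zx*bx+zy*BY).
Proof. ring. Qed.

Lemma lagr (ax ay bx BY zx zy : R) :
  (ax*bx+ay*BY)*(zx*zx+zy*zy) =
  (ax*zx+ay*zy)*(bx*zx+BY*zy) + (ax*zy-ay*zx)*(bx*zy-BY*zx).
Proof. ring. Qed.

Lemma perp_par ax ay bx BY zx zy :
  zx*zx+zy*zy <> 0 -> ax*zy-ay*zx = 0 -> bx*zx+BY*zy = 0 -> ax*bx+ay*BY = 0.
Proof.
  intros Hz H1 H2. pose proof (lagr ax ay bx BY zx zy) as L.
  rewrite H1, H2 in L. assert ((ax*bx+ay*BY)*(zx*zx+zy*zy) = 0) by lra.
  apply Rmult_integral in H. destruct H; [auto| contradiction].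
Qed.

Lemma perp_perp ax ay bx BY zx zy :
  zx*zx+zy*zy <> 0 -> ax*zx+ay*zy = 0 -> bx*zx+BY*zy = 0 -> ax*BY-ay*bx = 0.
Proof.
  intros Hz H1 H2. pose proof (crossid ax ay bx BY zx zy) as L.
  rewrite H1 in L. replace (zx*bx+zy*BY) with (bx*zx+BY*zy) in L by ring. rewrite H2 in L.
  assert ((ax*BY-ay*bx)*(zx*zx+zy*zy) = 0) by lra.
  apply Rmult_integral in H. destruct H; [auto| contradiction].
Qed.

Lemma par_par ax ay bx BY zx zy :
  zx*zx+zy*zy <> 0 -> ax*zy-ay*zx = 0 -> bx*zy-BY*zx = 0 -> ax*BY-ay*bx = 0.
Proof.
  intros Hz H1 H2. pose proof (crossid ax ay bx BY zx zy) as L.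
  replace (zx*ay-zy*ax) with (-(ax*zy-ay*zx)) in L by ring.
  replace (zx*BY-zy*bx) with (-(bx*zy-BY*zx)) in L by ring.
  rewrite H1, H2 in L.
  assert ((ax*BY-ay*bx)*(zx*zx+zy*zy) = 0) by lra.
  apply Rmult_integral in H. destruct H; [auto| contradiction].
Qed.

Lemma cos2_perp wx wy vx vy nx ny mx my :
  nx*nx+ny*ny <> 0 -> mx*mx+my*my <> 0 ->
  wx*nx+wy*ny = 0 -> vx*mx+vy*my = 0 ->
  (wx*vx+wy*vy)^2*(nx*nx+ny*ny)*(mx*mx+my*my) =
  (nx*mx+ny*my)^2*(wx*wx+wy*wy)*(vx*vx+vy*vy).
Proof.
  intros Hn Hm Hw Hv.
  set (al := nx*wy - ny*wx). set (be := mx*vy - my*vx).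
  set (Nn := nx*nx+ny*ny). set (Nm := mx*mx+my*my).
  assert (E1: Nn*wx = - al*ny).
  { replace (Nn*wx) with ((wx*nx+wy*ny)*nx - al*ny) by (unfold Nn, al; ring). rewrite Hw; ring. }
  assert (E2: Nn*wy = al*nx).
  { replace (Nn*wy) with ((wx*nx+wy*ny)*ny + al*nx) by (unfold Nn, al; ring). rewrite Hw; ring. }
  assert (E3: Nm*vx = - be*my).
  { replace (Nm*vx) with ((vx*mx+vy*my)*mx - be*my) by (unfold Nm, be; ring). rewrite Hv; ring. }
  assert (E4: Nm*vy = be*mx).
  { replace (Nm*vy) with ((vx*mx+vy*my)*my + be*mx) by (unfold Nm, be; ring). rewrite Hv; ring. }
  assert (D1: Nn*Nm*(wx*vx+wy*vy) = al*be*(nx*mx+ny*my)).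
  { replace (Nn*Nm*(wx*vx+wy*vy)) with ((Nn*wx)*(Nm*vx)+(Nn*wy)*(Nm*vy)) by ring.
    rewrite E1,E2,E3,E4. ring. }
  assert (D2: Nn*Nn*(wx*wx+wy*wy) = al*al*Nn).
  { replace (Nn*Nn*(wx*wx+wy*wy)) with ((Nn*wx)*(Nn*wx)+(Nn*wy)*(Nn*wy)) by ring.
    rewrite E1,E2. unfold Nn; ring. }
  assert (D3: Nm*Nm*(vx*vx+vy*vy) = be*be*Nm).
  { replace (Nm*Nm*(vx*vx+vy*vy)) with ((Nm*vx)*(Nm*vx)+(Nm*vy)*(Nm*vy)) by ring.
    rewrite E3,E4. unfold Nm; ring. }
  fold Nn Nm.
  apply (Rmult_eq_reg_l (Nn*Nm)). 2:{ intro H; apply Rmult_integral in H; tauto. }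
  replace (Nn*Nm*((wx*vx+wy*vy)^2*Nn*Nm)) with ((Nn*Nm*(wx*vx+wy*vy))^2) by ring.
  rewrite D1.
  replace (Nn*Nm*((nx*mx+ny*my)^2*(wx*wx+wy*wy)*(vx*vx+vy*vy)))
    with ((nx*mx+ny*my)^2*(Nn*Nn*(wx*wx+wy*wy))*(Nm*Nm*(vx*vx+vy*vy))/(Nn*Nm)).
  2:{ field. split; auto. }
  rewrite D2, D3. field. split; auto.
Qed.


Lemma cramer x1 y1 x2 y2 x3 y3 r1 r2 r3 :
  r1*x1+r2*y1+r3 = 0 -> r1*x2+r2*y2+r3 = 0 -> r1*x3+r2*y3+r3 = 0 ->
  (x2-x1)*(y3-y1)-(x3-x1)*(y2-y1) <> 0 -> r1 = 0 /\ r2 = 0 /\ r3 = 0.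
Proof.
  intros E1 E2 E3 HD.
  set (D := (x2-x1)*(y3-y1)-(x3-x1)*(y2-y1)) in *.
  assert (C1: r1*D = (y2-y3)*(r1*x1+r2*y1+r3) + (y3-y1)*(r1*x2+r2*y2+r3) + (y1-y2)*(r1*x3+r2*y3+r3)) by (unfold D; ring).
  assert (C2: r2*D = (x3-x2)*(r1*x1+r2*y1+r3) + (x1-x3)*(r1*x2+r2*y2+r3) + (x2-x1)*(r1*x3+r2*y3+r3)) by (unfold D; ring).
  assert (C3: r3*D = (x2*y3-x3*y2)*(r1*x1+r2*y1+r3) + (x3*y1-x1*y3)*(r1*x2+r2*y2+r3) + (x1*y2-x2*y1)*(r1*x3+r2*y3+r3)) by (unfold D; ring).
  rewrite E1,E2,E3 in C1,C2,C3.
  repeat split.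
  - assert (r1*D=0) by lra. apply Rmult_integral in H; tauto.
  - assert (r2*D=0) by lra. apply Rmult_integral in H; tauto.
  - assert (r3*D=0) by lra. apply Rmult_integral in H; tauto.
Qed.

Lemma sq_pos x : x <> 0 -> 0 < x*x.
Proof. intro H. destruct (Rlt_or_le x 0). nra. destruct H0. nra. congruence. Qed.

Lemma pos_quad ea eb vx vy : 0 < ea -> 0 < eb -> ~(vx = 0 /\ vy = 0) -> 0 < ea*vx^2+eb*vy^2.
Proof.
  intros Ha Hb Hv.
  destruct (Req_dec vx 0) as [Hx|Hx].
  - assert (vy <> 0) by tauto. pose proof (sq_pos vy H). assert (0 <= vx*vx) by nra.
    assert (0 < eb*(vy*vy)) by (apply Rmult_lt_0_compat; auto). nra.
  - pose proof (sq_pos vx Hx). assert (0 <= vy*vy) by nra.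
    assert (0 < ea*(vx*vx)) by (apply Rmult_lt_0_compat; auto). nra.
Qed.

Lemma noncol ea eb x1 y1 x2 y2 x3 y3 : 0<ea -> 0<eb ->
  ea*x1^2+eb*y1^2=1 -> ea*x2^2+eb*y2^2=1 -> ea*x3^2+eb*y3^2=1 ->
  ~(x1=x2/\y1=y2) -> ~(x2=x3/\y2=y3) -> ~(x3=x1/\y3=y1) ->
  (x2-x1)*(y3-y1)-(x3-x1)*(y2-y1) <> 0.
Proof.
  intros Ha Hb E1 E2 E3 N12 N23 N31 HD.
  set (vx := x2-x1). set (vy := y2-y1). set (wx := x3-x1). set (wy := y3-y1).
  assert (Hv: ~(vx = 0 /\ vy = 0)). { unfold vx, vy; intros [H1 H2]; apply N12; split; lra. }
  assert (Hvv: 0 < vx*vx+vy*vy). { pose proof (pos_quad 1 1 vx vy). nra. }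
  set (t := (vx*wx+vy*wy)/(vx*vx+vy*vy)).
  assert (Hwx: wx = t*vx).
  { unfold t. apply (Rmult_eq_reg_l (vx*vx+vy*vy)); [|lra].
    field_simplify; [|lra].
    assert (vy*(vx*wy-wx*vy) = 0). { unfold vx,vy,wx,wy. replace (vx*wy-wx*vy) with ((x2-x1)*(y3-y1)-(x3-x1)*(y2-y1)) by (unfold vx,vy,wx,wy;ring). rewrite HD; ring. }
    nra. }
  assert (Hwy: wy = t*vy).
  { unfold t. apply (Rmult_eq_reg_l (vx*vx+vy*vy)); [|lra].
    field_simplify; [|lra].
    assert (vx*(vx*wy-wx*vy) = 0). { unfold vx,vy,wx,wy. replace (vx*wy-wx*vy) with ((x2-x1)*(y3-y1)-(x3-x1)*(y2-y1)) by (unfold vx,vy,wx,wy;ring). rewrite HD; ring. }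
    nra. }
  assert (F: 0 < ea*vx^2+eb*vy^2) by (apply pos_quad; auto).
  assert (G1: 2*(ea*x1*vx+eb*y1*vy) + (ea*vx^2+eb*vy^2) = 0).
  { unfold vx, vy. replace x2 with (x1 + (x2-x1)) in E2 by ring. replace y2 with (y1+(y2-y1)) in E2 by ring. nra. }
  assert (G2: 2*t*(ea*x1*vx+eb*y1*vy) + t^2*(ea*vx^2+eb*vy^2) = 0).
  { assert (x3 = x1 + t*vx) by (unfold wx in Hwx; lra). assert (y3 = y1 + t*vy) by (unfold wy in Hwy; lra).
    rewrite H, H0 in E3. nra. }
  assert (t*(t-1)*(ea*vx^2+eb*vy^2) = 0).
  { replace (t*(t-1)*(ea*vx^2+eb*vy^2)) with ((2*t*(ea*x1*vx+eb*y1*vy) + t^2*(ea*vx^2+eb*vy^2)) - t*(2*(ea*x1*vx+eb*y1*vy) + (ea*vx^2+eb*vy^2))) by ring.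
    rewrite G1, G2. ring. }
  apply Rmult_integral in H. destruct H as [H|H]; [|lra].
  apply Rmult_integral in H. destruct H as [H|H].
  - apply N31. rewrite H in Hwx, Hwy. unfold wx,wy in *. split; lra.
  - apply N23. assert (t = 1) by lra. rewrite H0 in Hwx, Hwy. unfold wx,wy,vx,vy in *. split; lra.
Qed.


Lemma unit_nz ux uy : ux^2+uy^2 = 1 -> ~(ux = 0 /\ uy = 0).
Proof. intros H [H1 H2]. subst. lra. Qed.

Lemma c_neg ea eb x y xj yj dj ux uy : 0<ea -> 0<eb -> ea*x^2+eb*y^2=1 -> ea*xj^2+eb*yj^2=1 ->
  0<dj -> xj - x = dj*ux -> yj - y = dj*uy -> ux^2+uy^2 = 1 ->
  ea*x*ux+eb*y*uy = - dj*(ea*ux^2+eb*uy^2)/2 /\ ea*x*ux+eb*y*uy < 0.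
Proof.
  intros Ha Hb E Ej Hd Hx Hy U.
  assert (F: 0 < ea*ux^2+eb*uy^2) by (apply pos_quad; auto; apply unit_nz; auto).
  assert (xj = x + dj*ux) by lra. assert (yj = y + dj*uy) by lra. subst xj yj.
  assert (G: dj*(2*(ea*x*ux+eb*y*uy) + dj*(ea*ux^2+eb*uy^2)) = 0).
  { replace (dj*(2*(ea*x*ux+eb*y*uy) + dj*(ea*ux^2+eb*uy^2))) with
      ((ea*(x+dj*ux)^2+eb*(y+dj*uy)^2) - (ea*x^2+eb*y^2)) by ring. lra. }
  apply Rmult_integral in G. destruct G as [G|G]; [lra|].
  split. lra. assert (0 < dj*(ea*ux^2+eb*uy^2)) by (apply Rmult_lt_0_compat; auto). lra.
Qed.

Lemma decomp ea eb x y ux uy :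
  (ea*x*ux+eb*y*uy)^2 + (-eb*y*ux+ea*x*uy)^2 = (ea^2*x^2+eb^2*y^2)*(ux^2+uy^2).
Proof. ring. Qed.

Lemma vertex_J ea eb x y xj yj xk yk dj dk a1x a1y a2x a2y :
 0<ea -> 0<eb -> ea*x^2+eb*y^2=1 -> ea*xj^2+eb*yj^2=1 -> ea*xk^2+eb*yk^2=1 ->
 0<dj -> 0<dk -> xj - x = dj*a1x -> yj - y = dj*a1y -> xk - x = dk*a2x -> yk-y = dk*a2y ->
 a1x^2+a1y^2 = 1 -> a2x^2+a2y^2=1 ->
 (a1x+a2x)*(-eb*y) + (a1y+a2y)*(ea*x) = 0 ->
 ea*x*a1x+eb*y*a1y = ea*x*a2x+eb*y*a2y /\ ea*x*a1x+eb*y*a1y < 0.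
Proof.
  intros Ha Hb E Ej Ek Hdj Hdk X1 Y1 X2 Y2 U1 U2 R.
  destruct (c_neg ea eb x y xj yj dj a1x a1y) as [_ C1]; auto.
  destruct (c_neg ea eb x y xk yk dk a2x a2y) as [_ C2]; auto.
  pose proof (decomp ea eb x y a1x a1y) as D1. pose proof (decomp ea eb x y a2x a2y) as D2.
  rewrite U1 in D1. rewrite U2 in D2.
  assert (T: -eb*y*a1x+ea*x*a1y = -(-eb*y*a2x+ea*x*a2y)) by lra.
  assert (Sq: (ea*x*a1x+eb*y*a1y)^2 = (ea*x*a2x+eb*y*a2y)^2).
  { rewrite T in D1. lra. }
  split; [|auto].
  assert ((ea*x*a1x+eb*y*a1y - (ea*x*a2x+eb*y*a2y))*((ea*x*a1x+eb*y*a1y) + (ea*x*a2x+eb*y*a2y)) = 0) by nra.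
  apply Rmult_integral in H. destruct H; lra.
Qed.


Lemma N_pos ea eb x y : 0<ea -> 0<eb -> ea*x^2+eb*y^2=1 -> 0 < (ea*x)*(ea*x)+(eb*y)*(eb*y).
Proof.
  intros Ha Hb E. pose proof (pos_quad 1 1 (ea*x) (eb*y)).
  assert (~(ea*x = 0 /\ eb*y = 0)).
  { intros [H1 H2]. apply Rmult_integral in H1. apply Rmult_integral in H2.
    destruct H1; [lra|]. destruct H2; [lra|]. subst. lra. }
  specialize (H Rlt_0_1 Rlt_0_1 H0). lra.
Qed.

Lemma sumsq_nz zx zy : ~(zx = 0 /\ zy = 0) -> zx*zx+zy*zy <> 0.
Proof. intros H. pose proof (pos_quad 1 1 zx zy Rlt_0_1 Rlt_0_1 H). lra. Qed.

Lemma excenter ea eb x y xj yj xk yk qx qy dj dk djk a1x a1y a2x a2y bx b_y :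
 0<ea -> 0<eb -> ea*x^2+eb*y^2=1 -> ea*xj^2+eb*yj^2=1 -> ea*xk^2+eb*yk^2=1 ->
 0<dj -> 0<dk -> 0<djk ->
 xj - x = dj*a1x -> yj - y = dj*a1y -> xk - x = dk*a2x -> yk - y = dk*a2y ->
 xk - xj = djk*bx -> yk - yj = djk*b_y ->
 a1x^2+a1y^2 = 1 -> a2x^2+a2y^2=1 -> bx^2+b_y^2 = 1 ->
 (a1x+a2x)*(-eb*y) + (a1y+a2y)*(ea*x) = 0 ->
 (-a1x+bx)*(-eb*yj) + (-a1y+b_y)*(ea*xj) = 0 ->
 (-a2x-bx)*(-eb*yk) + (-a2y-b_y)*(ea*xk) = 0 ->
 a1x*a2y - a1y*a2x <> 0 ->
 ea*xj*qx+eb*yj*qy = 1 -> ea*xk*qx+eb*yk*qy = 1 ->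
 exists kap, qx = x + kap*(ea*x) /\ qy = y + kap*(eb*y) /\
   dj+dk+djk = 2*kap*(ea*x*a1x+eb*y*a1y).
Proof.
  intros Ha Hb E Ej Ek Hdj Hdk Hdjk X1 Y1 X2 Y2 Xb Yb U1 U2 Ub R RJ RK Hc Tj Tk.
  destruct (vertex_J ea eb x y xj yj xk yk dj dk a1x a1y a2x a2y) as [Jeq _]; auto.
  assert (Px: dk*a2x = dj*a1x + djk*bx) by lra.
  assert (Py: dk*a2y = dj*a1y + djk*b_y) by lra.
  assert (ZP: (a1x+a2x)*(a1x+a2x)+(a1y+a2y)*(a1y+a2y) <> 0).
  { apply sumsq_nz. intros [H1 H2]. apply Hc.
    replace a2x with (-a1x) by lra. replace a2y with (-a1y) by lra. ring. }
  assert (ZJ: (-a1x+bx)*(-a1x+bx)+(-a1y+b_y)*(-a1y+b_y) <> 0).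
  { apply sumsq_nz. intros [H1 H2].
    assert (bx = a1x) by lra. assert (b_y = a1y) by lra. subst bx b_y.
    assert (dk*(a1x*a2y - a1y*a2x) = 0).
    { replace (dk*(a1x*a2y - a1y*a2x)) with (a1x*(dk*a2y) - a1y*(dk*a2x)) by ring.
      rewrite Px, Py. ring. }
    apply Rmult_integral in H. destruct H; lra. }
  assert (ZK: (-a2x-bx)*(-a2x-bx)+(-a2y-b_y)*(-a2y-b_y) <> 0).
  { apply sumsq_nz. intros [H1 H2].
    assert (bx = -a2x) by lra. assert (b_y = -a2y) by lra. subst bx b_y.
    assert (dj*(a1x*a2y - a1y*a2x) = 0).
    { replace (dj*(a1x*a2y - a1y*a2x)) with ((dj*a1x)*a2y - (dj*a1y)*a2x) by ring.
      replace (dj*a1x) with (dk*a2x + djk*a2x) by lra.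
      replace (dj*a1y) with (dk*a2y + djk*a2y) by lra. ring. }
    apply Rmult_integral in H. destruct H; lra. }
  pose proof (N_pos ea eb xj yj Ha Hb Ej) as NJ.
  pose proof (N_pos ea eb xk yk Ha Hb Ek) as NK.
  pose proof (N_pos ea eb x y Ha Hb E) as NP.
  set (w2x := qx - xj). set (w2y := qy - yj). set (w3x := qx - xk). set (w3y := qy - yk).
  assert (W2n: w2x*(ea*xj)+w2y*(eb*yj) = 0).
  { replace (w2x*(ea*xj)+w2y*(eb*yj)) with ((ea*xj*qx+eb*yj*qy) - (ea*xj^2+eb*yj^2)) by (unfold w2x, w2y; ring). lra. }
  assert (W3n: w3x*(ea*xk)+w3y*(eb*yk) = 0).
  { replace (w3x*(ea*xk)+w3y*(eb*yk)) with ((ea*xk*qx+eb*yk*qy) - (ea*xk^2+eb*yk^2)) by (unfold w3x, w3y; ring). lra. }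
  assert (A2: w2x*(-a1x+bx)+w2y*(-a1y+b_y) = 0).
  { pose proof (lagr w2x w2y (-a1x+bx) (-a1y+b_y) (ea*xj) (eb*yj)) as L.
    rewrite W2n in L.
    assert (((-a1x+bx)*(eb*yj) - (-a1y+b_y)*(ea*xj)) = 0) by lra.
    rewrite H in L. 
    assert ((w2x*(-a1x+bx)+w2y*(-a1y+b_y))*((ea*xj)*(ea*xj)+(eb*yj)*(eb*yj)) = 0) by lra.
    apply Rmult_integral in H0. destruct H0; lra. }
  assert (A3: w3x*(-a2x-bx)+w3y*(-a2y-b_y) = 0).
  { pose proof (lagr w3x w3y (-a2x-bx) (-a2y-b_y) (ea*xk) (eb*yk)) as L.
    rewrite W3n in L.
    assert (((-a2x-bx)*(eb*yk) - (-a2y-b_y)*(ea*xk)) = 0) by lra.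
    rewrite H in L. 
    assert ((w3x*(-a2x-bx)+w3y*(-a2y-b_y))*((ea*xk)*(ea*xk)+(eb*yk)*(eb*yk)) = 0) by lra.
    apply Rmult_integral in H0. destruct H0; lra. }
  assert (NJY: (ea*xj)*(-a1x-bx)+(eb*yj)*(-a1y-b_y) = 0).
  { apply (perp_par (ea*xj) (eb*yj) (-a1x-bx) (-a1y-b_y) (-a1x+bx) (-a1y+b_y)); auto.
    - lra.
    - replace ((-a1x-bx)*(-a1x+bx)+(-a1y-b_y)*(-a1y+b_y)) with ((a1x^2+a1y^2)-(bx^2+b_y^2)) by ring. lra. }
  assert (NKY: (ea*xk)*(-a2x+bx)+(eb*yk)*(-a2y+b_y) = 0).
  { apply (perp_par (ea*xk) (eb*yk) (-a2x+bx) (-a2y+b_y) (-a2x-bx) (-a2y-b_y)); auto.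
    - lra.
    - replace ((-a2x+bx)*(-a2x-bx)+(-a2y+b_y)*(-a2y-b_y)) with ((a2x^2+a2y^2)-(bx^2+b_y^2)) by ring. lra. }
  assert (CJ: w2x*(-a1y-b_y) - w2y*(-a1x-bx) = 0).
  { apply (perp_perp w2x w2y (-a1x-bx) (-a1y-b_y) (ea*xj) (eb*yj)); [lra|lra|lra]. }
  assert (CK: w3x*(-a2y+b_y) - w3y*(-a2x+bx) = 0).
  { apply (perp_perp w3x w3y (-a2x+bx) (-a2y+b_y) (ea*xk) (eb*yk)); [lra|lra|lra]. }
  set (Wx := qx - x). set (Wy := qy - y).
  assert (EW2x: Wx = w2x + dj*a1x) by (unfold Wx, w2x; lra).
  assert (EW2y: Wy = w2y + dj*a1y) by (unfold Wy, w2y; lra).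
  assert (EW3x: Wx = w3x + dk*a2x) by (unfold Wx, w3x; lra).
  assert (EW3y: Wy = w3y + dk*a2y) by (unfold Wy, w3y; lra).
  assert (E23x: w2x = w3x + djk*bx) by (unfold w2x, w3x; lra).
  assert (E23y: w2y = w3y + djk*b_y) by (unfold w2y, w3y; lra).
  assert (WZ: Wx*(a1y+a2y) - Wy*(a1x+a2x) = 0).
  { replace (Wx*(a1y+a2y) - Wy*(a1x+a2x)) with
      ((Wx*a1y - Wy*a1x) + (Wx*a2y - Wy*a2x)) by ring.
    replace (Wx*a1y - Wy*a1x) with (w2x*a1y - w2y*a1x) by (rewrite EW2x, EW2y; ring).
    replace (Wx*a2y - Wy*a2x) with (w3x*a2y - w3y*a2x) by (rewrite EW3x, EW3y; ring).
    assert (w2x*a1y - w2y*a1x = -(w2x*b_y - w2y*bx)) by lra.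
    assert (w3x*a2y - w3y*a2x = w3x*b_y - w3y*bx) by lra.
    assert (w3x*b_y - w3y*bx = w2x*b_y - w2y*bx) by (rewrite E23x, E23y; ring).
    lra. }
  assert (NZ: (ea*x)*(a1y+a2y) - (eb*y)*(a1x+a2x) = 0) by lra.
  assert (WN: Wx*(eb*y) - Wy*(ea*x) = 0).
  { apply (par_par Wx Wy (ea*x) (eb*y) (a1x+a2x) (a1y+a2y)); auto. }
  set (Nn := (ea*x)*(ea*x)+(eb*y)*(eb*y)) in *.
  exists ((Wx*(ea*x)+Wy*(eb*y))/Nn).
  assert (Kx: Wx = (Wx*(ea*x)+Wy*(eb*y))/Nn*(ea*x)).
  { apply (Rmult_eq_reg_l Nn); [|lra]. field_simplify; [|lra].
    replace (Nn*Wx) with ((Wx*(ea*x)+Wy*(eb*y))*(ea*x) + (Wx*(eb*y) - Wy*(ea*x))*(eb*y)) by (unfold Nn; ring).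
    rewrite WN. ring. }
  assert (Ky: Wy = (Wx*(ea*x)+Wy*(eb*y))/Nn*(eb*y)).
  { apply (Rmult_eq_reg_l Nn); [|lra]. field_simplify; [|lra].
    replace (Nn*Wy) with ((Wx*(ea*x)+Wy*(eb*y))*(eb*y) - (Wx*(eb*y) - Wy*(ea*x))*(ea*x)) by (unfold Nn; ring).
    rewrite WN. ring. }
  set (kap := (Wx*(ea*x)+Wy*(eb*y))/Nn) in *.
  split; [unfold Wx in Kx; lra|]. split; [unfold Wy in Ky; lra|].
  assert (LL: Wx*(a1x+a2x)+Wy*(a1y+a2y) = dj+dk+djk).
  { replace (Wx*(a1x+a2x)+Wy*(a1y+a2y)) with ((Wx*a1x+Wy*a1y)+(Wx*a2x+Wy*a2y)) by ring.
    replace (Wx*a1x+Wy*a1y) with (w2x*a1x+w2y*a1y + dj*(a1x^2+a1y^2)) by (rewrite EW2x, EW2y; ring).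
    replace (Wx*a2x+Wy*a2y) with (w3x*a2x+w3y*a2y + dk*(a2x^2+a2y^2)) by (rewrite EW3x, EW3y; ring).
    rewrite U1, U2.
    assert (w2x*a1x+w2y*a1y = w2x*bx+w2y*b_y) by lra.
    assert (w3x*a2x+w3y*a2y = -(w3x*bx+w3y*b_y)) by lra.
    assert (w2x*bx+w2y*b_y = w3x*bx+w3y*b_y + djk*(bx^2+b_y^2)) by (rewrite E23x, E23y; ring).
    rewrite Ub in H1. lra. }
  rewrite <- LL. rewrite Kx, Ky at 1.
  replace (kap * (ea * x) * (a1x + a2x) + kap * (eb * y) * (a1y + a2y)) with
    (kap*((ea*x*a1x+eb*y*a1y) + (ea*x*a2x+eb*y*a2y))) by ring.
  rewrite <- Jeq. ring.
Qed.


Lemma frame ea eb kap x1 y1 x2 y2 x3 y3 :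
 0<ea -> 0<eb -> ea*x1^2+eb*y1^2=1 -> ea*x2^2+eb*y2^2=1 -> ea*x3^2+eb*y3^2=1 ->
 ea*x1*x2+eb*y1*y2 + kap*(ea^2*x1*x2+eb^2*y1*y2) = 1 ->
 ea*x1*x3+eb*y1*y3 + kap*(ea^2*x1*x3+eb^2*y1*y3) = 1 ->
 ea*x2*x3+eb*y2*y3 + kap*(ea^2*x2*x3+eb^2*y2*y3) = 1 ->
 (x2-x1)*(y3-y1)-(x3-x1)*(y2-y1) <> 0 -> kap <> 0 ->
 1/(ea^2*x1^2+eb^2*y1^2) + 1/(ea^2*x2^2+eb^2*y2^2) + 1/(ea^2*x3^2+eb^2*y3^2) = -kap /\
 kap^2*ea*eb + 2*kap*(ea+eb) + 3 = 0.
Proof.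
  intros Ha Hb E1 E2 E3 H12 H13 H23 HD Hk.
  pose proof (N_pos ea eb x1 y1 Ha Hb E1) as P1.
  pose proof (N_pos ea eb x2 y2 Ha Hb E2) as P2.
  pose proof (N_pos ea eb x3 y3 Ha Hb E3) as P3.
  set (N1 := ea^2*x1^2+eb^2*y1^2). set (N2 := ea^2*x2^2+eb^2*y2^2). set (N3 := ea^2*x3^2+eb^2*y3^2).
  assert (Q1: 0 < N1) by (unfold N1; nra). assert (Q2: 0 < N2) by (unfold N2; nra). assert (Q3: 0 < N3) by (unfold N3; nra).
  set (al := ea + kap*ea^2). set (be := eb + kap*eb^2).
  assert (K11: al*x1*x1+be*y1*y1 - 1 = kap*N1) by (unfold al, be, N1; nra).
  assert (K22: al*x2*x2+be*y2*y2 - 1 = kap*N2) by (unfold al, be, N2; nra).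
  assert (K33: al*x3*x3+be*y3*y3 - 1 = kap*N3) by (unfold al, be, N3; nra).
  assert (K12: al*x1*x2+be*y1*y2 - 1 = 0) by (unfold al, be; nra).
  assert (K13: al*x1*x3+be*y1*y3 - 1 = 0) by (unfold al, be; nra).
  assert (K23: al*x2*x3+be*y2*y3 - 1 = 0) by (unfold al, be; nra).
  assert (K21: al*x2*x1+be*y2*y1 - 1 = 0) by (rewrite <- K12; ring).
  assert (K31: al*x3*x1+be*y3*y1 - 1 = 0) by (rewrite <- K13; ring).
  assert (K32: al*x3*x2+be*y3*y2 - 1 = 0) by (rewrite <- K23; ring).
  set (s1 := al*(x1/N1+x2/N2+x3/N3)). set (s2 := be*(y1/N1+y2/N2+y3/N3)).
  set (s3 := -(1/N1+1/N2+1/N3) - kap).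
  assert (R3: s1 = 0 /\ s2 = 0 /\ s3 = 0).
  { apply (cramer x1 y1 x2 y2 x3 y3); auto.
    - replace (s1*x1+s2*y1+s3) with ((al*x1*x1+be*y1*y1-1)/N1 + (al*x2*x1+be*y2*y1-1)/N2 + (al*x3*x1+be*y3*y1-1)/N3 - kap)
        by (unfold s1,s2,s3; field; lra).
      rewrite K11, K21, K31. field. lra.
    - replace (s1*x2+s2*y2+s3) with ((al*x1*x2+be*y1*y2-1)/N1 + (al*x2*x2+be*y2*y2-1)/N2 + (al*x3*x2+be*y3*y2-1)/N3 - kap)
        by (unfold s1,s2,s3; field; lra).
      rewrite K12, K22, K32. field. lra.
    - replace (s1*x3+s2*y3+s3) with ((al*x1*x3+be*y1*y3-1)/N1 + (al*x2*x3+be*y2*y3-1)/N2 + (al*x3*x3+be*y3*y3-1)/N3 - kap)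
        by (unfold s1,s2,s3; field; lra).
      rewrite K13, K23, K33. field. lra. }
  set (t1 := al*(x1*x1/N1+x2*x2/N2+x3*x3/N3) - kap). set (t2 := be*(x1*y1/N1+x2*y2/N2+x3*y3/N3)).
  set (t3 := -(x1/N1+x2/N2+x3/N3)).
  assert (R1: t1 = 0 /\ t2 = 0 /\ t3 = 0).
  { apply (cramer x1 y1 x2 y2 x3 y3); auto.
    - replace (t1*x1+t2*y1+t3) with (x1*(al*x1*x1+be*y1*y1-1)/N1 + x2*(al*x2*x1+be*y2*y1-1)/N2 + x3*(al*x3*x1+be*y3*y1-1)/N3 - kap*x1)
        by (unfold t1,t2,t3; field; lra).
      rewrite K11, K21, K31. field. lra.
    - replace (t1*x2+t2*y2+t3) with (x1*(al*x1*x2+be*y1*y2-1)/N1 + x2*(al*x2*x2+be*y2*y2-1)/N2 + x3*(al*x3*x2+be*y3*y2-1)/N3 - kap*x2)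
        by (unfold t1,t2,t3; field; lra).
      rewrite K12, K22, K32. field. lra.
    - replace (t1*x3+t2*y3+t3) with (x1*(al*x1*x3+be*y1*y3-1)/N1 + x2*(al*x2*x3+be*y2*y3-1)/N2 + x3*(al*x3*x3+be*y3*y3-1)/N3 - kap*x3)
        by (unfold t1,t2,t3; field; lra).
      rewrite K13, K23, K33. field. lra. }
  set (u1 := al*(x1*y1/N1+x2*y2/N2+x3*y3/N3)). set (u2 := be*(y1*y1/N1+y2*y2/N2+y3*y3/N3) - kap).
  set (u3 := -(y1/N1+y2/N2+y3/N3)).
  assert (R2: u1 = 0 /\ u2 = 0 /\ u3 = 0).
  { apply (cramer x1 y1 x2 y2 x3 y3); auto.
    - replace (u1*x1+u2*y1+u3) with (y1*(al*x1*x1+be*y1*y1-1)/N1 + y2*(al*x2*x1+be*y2*y1-1)/N2 + y3*(al*x3*x1+be*y3*y1-1)/N3 - kap*y1)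
        by (unfold u1,u2,u3; field; lra).
      rewrite K11, K21, K31. field. lra.
    - replace (u1*x2+u2*y2+u3) with (y1*(al*x1*x2+be*y1*y2-1)/N1 + y2*(al*x2*x2+be*y2*y2-1)/N2 + y3*(al*x3*x2+be*y3*y2-1)/N3 - kap*y2)
        by (unfold u1,u2,u3; field; lra).
      rewrite K12, K22, K32. field. lra.
    - replace (u1*x3+u2*y3+u3) with (y1*(al*x1*x3+be*y1*y3-1)/N1 + y2*(al*x2*x3+be*y2*y3-1)/N2 + y3*(al*x3*x3+be*y3*y3-1)/N3 - kap*y3)
        by (unfold u1,u2,u3; field; lra).
      rewrite K13, K23, K33. field. lra. }
  destruct R3 as [_ [_ R3]]. destruct R1 as [R1 _]. destruct R2 as [_ [R2 _]].
  split. { unfold s3 in R3. lra. }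
  set (X := x1*x1/N1+x2*x2/N2+x3*x3/N3) in *. set (Y := y1*y1/N1+y2*y2/N2+y3*y3/N3) in *.
  assert (S: 1/N1+1/N2+1/N3 = ea*X + eb*Y).
  { unfold X, Y. replace (ea*(x1*x1/N1+x2*x2/N2+x3*x3/N3) + eb*(y1*y1/N1+y2*y2/N2+y3*y3/N3))
      with ((ea*x1^2+eb*y1^2)/N1 + (ea*x2^2+eb*y2^2)/N2 + (ea*x3^2+eb*y3^2)/N3) by (field; lra).
    rewrite E1, E2, E3. reflexivity. }
  assert (AX: al*X = kap) by (unfold t1 in R1; lra).
  assert (BY: be*Y = kap) by (unfold u2 in R2; lra).
  assert (SS: ea*X+eb*Y = -kap) by (unfold s3 in R3; lra).
  assert (M: kap*(kap^2*ea*eb + 2*kap*(ea+eb) + 3) = 0).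
  { replace (kap*(kap^2*ea*eb + 2*kap*(ea+eb) + 3)) with
      ((kap*(1+kap*eb) + kap*(1+kap*ea)) - (1+kap*ea)*(1+kap*eb)*(-kap)) by ring.
    assert (Z: (1+kap*ea)*(1+kap*eb)*(ea*X+eb*Y) = (1+kap*eb)*(al*X) + (1+kap*ea)*(be*Y)) by (unfold al,be; ring).
    rewrite SS, AX, BY in Z. lra. }
  apply Rmult_integral in M. destruct M; [contradiction|auto].
Qed.


Lemma Jsq ea eb kap x1 y1 x3 y3 d vx vy :
 0<ea -> 0<eb -> ea*x1^2+eb*y1^2=1 -> ea*x3^2+eb*y3^2=1 -> 0<d ->
 x3 - x1 = d*vx -> y3 - y1 = d*vy -> vx^2+vy^2=1 ->
 ea*x1*x3+eb*y1*y3 + kap*(ea^2*x1*x3+eb^2*y1*y3) = 1 ->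
 (ea*x1*vx+eb*y1*vy)^2*(kap*(ea+eb)+2) = kap*ea*eb.
Proof.
  intros Ha Hb E1 E3 Hd X Y U H.
  destruct (c_neg ea eb x1 y1 x3 y3 d vx vy) as [Cb _]; auto.
  set (Bv := ea*x1*vx+eb*y1*vy) in *.
  set (Av := -eb*y1*vx+ea*x1*vy).
  set (N := ea^2*x1^2+eb^2*y1^2).
  set (m := -ea^2*eb*x1*y1 + ea*eb^2*x1*y1).
  set (K := ea^3*x1^2+eb^3*y1^2).
  set (G := ea^2*x1*vx+eb^2*y1*vy).
  set (f := ea*vx^2+eb*vy^2) in *.
  assert (NP: 0 < N) by (pose proof (N_pos ea eb x1 y1 Ha Hb E1); unfold N; nra).
  assert (Ia: N^2*f = Av^2*(ea*eb)*(ea*x1^2+eb*y1^2) + 2*Av*Bv*m + Bv^2*K) by (unfold N,f,Av,Bv,m,K; ring).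
  rewrite E1 in Ia.
  assert (Ib: N*G = Av*m + Bv*K) by (unfold N,G,Av,Bv,m,K; ring).
  assert (x3 = x1 + d*vx) by lra. assert (y3 = y1 + d*vy) by lra. subst x3 y3.
  assert (H2: d*Bv + kap*N + kap*d*G = 0).
  { replace (d*Bv + kap*N + kap*d*G) with
      ((ea*x1*(x1+d*vx)+eb*y1*(y1+d*vy) + kap*(ea^2*x1*(x1+d*vx)+eb^2*y1*(y1+d*vy))) - (ea*x1^2+eb*y1^2))
      by (unfold Bv, N, G; ring). lra. }
  assert (S1: d*Bv*N + kap*N^2 + kap*d*(Av*m+Bv*K) = 0).
  { rewrite <- Ib. replace (d*Bv*N + kap*N^2 + kap*d*(N*G)) with (N*(d*Bv + kap*N + kap*d*G)) by ring.
    rewrite H2. ring. }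
  assert (S2: -2*Bv*N^2 = d*(Av^2*(ea*eb) + 2*Av*Bv*m + Bv^2*K)).
  { assert (HB2: -2*Bv = d*f) by lra.
    replace (-2*Bv*N^2) with ((-2*Bv)*N^2) by ring. rewrite HB2.
    replace (d*f*N^2) with (d*(N^2*f)) by ring. rewrite Ia. ring. }
  assert (R: d*(2*Bv^2*N - kap*Av^2*(ea*eb) + kap*Bv^2*K) = 0).
  { replace (d*(2*Bv^2*N - kap*Av^2*(ea*eb) + kap*Bv^2*K)) with
      (2*Bv*(d*Bv*N + kap*N^2 + kap*d*(Av*m+Bv*K)) + kap*(-2*Bv*N^2 - d*(Av^2*(ea*eb) + 2*Av*Bv*m + Bv^2*K))) by ring.
    rewrite S1, S2. ring. }
  apply Rmult_integral in R. destruct R as [R|R]; [lra|].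
  assert (Dc: Bv^2 + Av^2 = N).
  { pose proof (decomp ea eb x1 y1 vx vy) as DD. rewrite U in DD. unfold Bv, Av, N. lra. }
  assert (KE: K + ea*eb = N*(ea+eb)).
  { assert (K + ea*eb - N*(ea+eb) = ea*eb*(1 - (ea*x1^2+eb*y1^2))) by (unfold K, N; ring).
    rewrite E1 in H0. lra. }
  assert (M: N*(Bv^2*(kap*(ea+eb)+2) - kap*ea*eb) = 0).
  { assert (Z1: N*(ea+eb) - K - ea*eb = 0) by lra.
    assert (Z2: N - Bv^2 - Av^2 = 0) by lra.
    replace (N*(Bv^2*(kap*(ea+eb)+2) - kap*ea*eb)) with
      ((2*Bv^2*N - kap*Av^2*(ea*eb) + kap*Bv^2*K) + kap*Bv^2*(N*(ea+eb) - K - ea*eb) - kap*ea*eb*(N - Bv^2 - Av^2)) by ring.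
    rewrite R, Z1, Z2. ring. }
  apply Rmult_integral in M. destruct M as [M|M]; lra.
Qed.


Lemma unit_id a1x a1y a2x a2y bx b_y :
  a1x^2+a1y^2 = 1 -> a2x^2+a2y^2=1 -> bx^2+b_y^2 = 1 ->
  4*((-a1x+bx)*(-a2x-bx)+(-a1y+b_y)*(-a2y-b_y))^2 =
  ((a1x-a2x)*(a1x-a2x)+(a1y-a2y)*(a1y-a2y)) *
  ((-a1x+bx)*(-a1x+bx)+(-a1y+b_y)*(-a1y+b_y)) *
  ((-a2x-bx)*(-a2x-bx)+(-a2y-b_y)*(-a2y-b_y)).
Proof.
  intros U1 U2 Ub.
  set (p := a1x*bx+a1y*b_y). set (q := bx*a2x+b_y*a2y). set (r := a1x*a2x+a1y*a2y).
  assert (Gr: (a1x^2+a1y^2)*(bx^2+b_y^2)*(a2x^2+a2y^2) + 2*p*q*r - (a1x^2+a1y^2)*q^2 - (bx^2+b_y^2)*r^2 - (a2x^2+a2y^2)*p^2 = 0)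
    by (unfold p,q,r; ring).
  rewrite U1, U2, Ub in Gr.
  replace ((-a1x+bx)*(-a2x-bx)+(-a1y+b_y)*(-a2y-b_y)) with (p + r - q - (bx^2+b_y^2)) by (unfold p,q,r; ring).
  replace ((a1x-a2x)*(a1x-a2x)+(a1y-a2y)*(a1y-a2y)) with ((a1x^2+a1y^2)+(a2x^2+a2y^2) - 2*r) by (unfold r; ring).
  replace ((-a1x+bx)*(-a1x+bx)+(-a1y+b_y)*(-a1y+b_y)) with ((a1x^2+a1y^2)+(bx^2+b_y^2) - 2*p) by (unfold p; ring).
  replace ((-a2x-bx)*(-a2x-bx)+(-a2y-b_y)*(-a2y-b_y)) with ((a2x^2+a2y^2)+(bx^2+b_y^2) + 2*q) by (unfold q; ring).
  rewrite U1, U2, Ub. nra.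
Qed.

Lemma nz_sums dj dk djk a1x a1y a2x a2y bx b_y :
  0<dj -> 0<dk -> 0<djk ->
  dk*a2x = dj*a1x + djk*bx -> dk*a2y = dj*a1y + djk*b_y ->
  a1x*a2y - a1y*a2x <> 0 ->
  (a1x+a2x)*(a1x+a2x)+(a1y+a2y)*(a1y+a2y) <> 0 /\
  (-a1x+bx)*(-a1x+bx)+(-a1y+b_y)*(-a1y+b_y) <> 0 /\
  (-a2x-bx)*(-a2x-bx)+(-a2y-b_y)*(-a2y-b_y) <> 0.
Proof.
  intros Hdj Hdk Hdjk Px Py Hc. repeat split.
  { apply sumsq_nz. intros [H1 H2]. apply Hc.
    replace a2x with (-a1x) by lra. replace a2y with (-a1y) by lra. ring. }
  { apply sumsq_nz. intros [H1 H2].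
    assert (bx = a1x) by lra. assert (b_y = a1y) by lra. subst bx b_y.
    assert (dk*(a1x*a2y - a1y*a2x) = 0).
    { replace (dk*(a1x*a2y - a1y*a2x)) with (a1x*(dk*a2y) - a1y*(dk*a2x)) by ring.
      rewrite Px, Py. ring. }
    apply Rmult_integral in H. destruct H; lra. }
  { apply sumsq_nz. intros [H1 H2].
    assert (bx = -a2x) by lra. assert (b_y = -a2y) by lra. subst bx b_y.
    assert (dj*(a1x*a2y - a1y*a2x) = 0).
    { replace (dj*(a1x*a2y - a1y*a2x)) with ((dj*a1x)*a2y - (dj*a1y)*a2x) by ring.
      replace (dj*a1x) with (dk*a2x + djk*a2x) by lra.
      replace (dj*a1y) with (dk*a2y + djk*a2y) by lra. ring. }
    apply Rmult_integral in H. destruct H; lra. }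
Qed.

Lemma angle_vertex ea eb x y xj yj xk yk dj dk djk a1x a1y a2x a2y bx b_y wx wy vx vy :
 0<ea -> 0<eb -> ea*x^2+eb*y^2=1 -> ea*xj^2+eb*yj^2=1 -> ea*xk^2+eb*yk^2=1 ->
 0<dj -> 0<dk -> 0<djk ->
 xj - x = dj*a1x -> yj - y = dj*a1y -> xk - x = dk*a2x -> yk - y = dk*a2y ->
 xk - xj = djk*bx -> yk - yj = djk*b_y ->
 a1x^2+a1y^2 = 1 -> a2x^2+a2y^2=1 -> bx^2+b_y^2 = 1 ->
 (a1x+a2x)*(-eb*y) + (a1y+a2y)*(ea*x) = 0 ->
 (-a1x+bx)*(-eb*yj) + (-a1y+b_y)*(ea*xj) = 0 ->
 (-a2x-bx)*(-eb*yk) + (-a2y-b_y)*(ea*xk) = 0 ->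
 a1x*a2y - a1y*a2x <> 0 ->
 wx*(ea*xk)+wy*(eb*yk) = 0 -> vx*(ea*xj)+vy*(eb*yj) = 0 ->
 0 < wx*wx+wy*wy -> 0 < vx*vx+vy*vy ->
 (wx*vx+wy*vy)^2/((wx*wx+wy*wy)*(vx*vx+vy*vy)) =
   1 - (ea*x*a1x+eb*y*a1y)^2/(ea^2*x^2+eb^2*y^2).
Proof.
  intros Ha Hb E Ej Ek Hdj Hdk Hdjk X1 Y1 X2 Y2 Xb Yb U1 U2 Ub R RJ RK Hc Wn Vn Wp Vp.
  destruct (vertex_J ea eb x y xj yj xk yk dj dk a1x a1y a2x a2y) as [Jeq _]; auto.
  assert (Px: dk*a2x = dj*a1x + djk*bx) by lra.
  assert (Py: dk*a2y = dj*a1y + djk*b_y) by lra.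
  destruct (nz_sums dj dk djk a1x a1y a2x a2y bx b_y) as [ZP [ZJ ZK]]; auto.
  pose proof (N_pos ea eb xj yj Ha Hb Ej) as NJ.
  pose proof (N_pos ea eb xk yk Ha Hb Ek) as NK.
  pose proof (N_pos ea eb x y Ha Hb E) as NP.
  pose proof (cos2_perp wx wy vx vy (ea*xk) (eb*yk) (ea*xj) (eb*yj)) as C1.
  specialize (C1 ltac:(lra) ltac:(lra) Wn Vn).
  pose proof (cos2_perp (-a1x+bx) (-a1y+b_y) (-a2x-bx) (-a2y-b_y) (-eb*yj) (ea*xj) (-eb*yk) (ea*xk)) as C2.
  assert (NJ': (-eb*yj)*(-eb*yj)+(ea*xj)*(ea*xj) <> 0) by (replace ((-eb*yj)*(-eb*yj)+(ea*xj)*(ea*xj)) with ((ea*xj)*(ea*xj)+(eb*yj)*(eb*yj)) by ring; lra).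
  assert (NK': (-eb*yk)*(-eb*yk)+(ea*xk)*(ea*xk) <> 0) by (replace ((-eb*yk)*(-eb*yk)+(ea*xk)*(ea*xk)) with ((ea*xk)*(ea*xk)+(eb*yk)*(eb*yk)) by ring; lra).
  specialize (C2 NJ' NK' RJ RK).
  pose proof (unit_id a1x a1y a2x a2y bx b_y U1 U2 Ub) as UI.
  set (Nj := (ea*xj)*(ea*xj)+(eb*yj)*(eb*yj)) in *.
  set (Nk := (ea*xk)*(ea*xk)+(eb*yk)*(eb*yk)) in *.
  set (h := (ea*xk)*(ea*xj)+(eb*yk)*(eb*yj)) in *.
  replace ((-eb*yj)*(-eb*yj)+(ea*xj)*(ea*xj)) with Nj in C2 by (unfold Nj; ring).
  replace ((-eb*yk)*(-eb*yk)+(ea*xk)*(ea*xk)) with Nk in C2 by (unfold Nk; ring).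
  replace ((-eb*yj)*(-eb*yk)+(ea*xj)*(ea*xk)) with h in C2 by (unfold h; ring).
  set (YY2 := (-a1x+bx)*(-a1x+bx)+(-a1y+b_y)*(-a1y+b_y)) in *.
  set (YY3 := (-a2x-bx)*(-a2x-bx)+(-a2y-b_y)*(-a2y-b_y)) in *.
  set (yy := (-a1x+bx)*(-a2x-bx)+(-a1y+b_y)*(-a2y-b_y)) in *.
  set (D12 := (a1x-a2x)*(a1x-a2x)+(a1y-a2y)*(a1y-a2y)) in *.
  assert (Hh: 4*h^2 = D12*Nj*Nk).
  { apply (Rmult_eq_reg_l (YY2*YY3)). 2:{ intro HH. apply Rmult_integral in HH. tauto. }
    replace (YY2*YY3*(4*h^2)) with (4*(h^2*YY2*YY3)) by ring. rewrite <- C2.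
    replace (4*(yy^2*Nj*Nk)) with ((4*yy^2)*Nj*Nk) by ring. rewrite UI. ring. }
  set (W := wx*wx+wy*wy) in *. set (V := vx*vx+vy*vy) in *. set (wv := wx*vx+wy*vy) in *.
  replace ((ea * xj) * (ea * xj) + (eb * yj) * (eb * yj)) with Nj in C1 by reflexivity.
  assert (Hwv: 4*wv^2 = D12*W*V).
  { apply (Rmult_eq_reg_l (Nk*Nj)). 2:{ intro HH. apply Rmult_integral in HH. destruct HH; lra. }
    replace (Nk*Nj*(4*wv^2)) with (4*(wv^2*Nk*Nj)) by ring. rewrite C1.
    replace (4*(h^2*W*V)) with ((4*h^2)*W*V) by ring. rewrite Hh. ring. }
  set (c := ea*x*a1x+eb*y*a1y) in *.
  set (N := ea^2*x^2+eb^2*y^2).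
  assert (NN: N = (ea*x)*(ea*x)+(eb*y)*(eb*y)) by (unfold N; ring).
  assert (Dot: N*(a1x*a2x+a1y*a2y) = 2*c^2 - N).
  { pose proof (lagr a1x a1y a2x a2y (ea*x) (eb*y)) as L.
    assert (T: a2x*(eb*y) - a2y*(ea*x) = -(a1x*(eb*y) - a1y*(ea*x))) by lra.
    rewrite T in L. rewrite <- NN in L.
    pose proof (decomp ea eb x y a1x a1y) as DD. rewrite U1 in DD. fold c in DD. fold N in DD.
    replace (a1x*(ea*x)+a1y*(eb*y)) with c in L by (unfold c; ring).
    replace (a2x*(ea*x)+a2y*(eb*y)) with c in L by (rewrite Jeq; ring).
    replace (-eb*y*a1x+ea*x*a1y) with (-(a1x*(eb*y) - a1y*(ea*x))) in DD by ring.
    set (t := a1x*(eb*y) - a1y*(ea*x)) in *.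
    assert (t^2 = N - c^2) by lra.
    replace (c*c + t*(-t)) with (c^2 - t^2) in L by ring. rewrite H in L. lra. }
  assert (D12e: D12 = 2 - 2*(a1x*a2x+a1y*a2y)).
  { unfold D12. replace 2 with ((a1x^2+a1y^2)+(a2x^2+a2y^2)) at 1 by lra. ring. }
  assert (NP': 0 < N) by lra.
  assert (Key: N*wv^2 = (N - c^2)*(W*V)).
  { assert (4*(N*wv^2) = N*D12*W*V) by (replace (N*D12*W*V) with (N*(D12*W*V)) by ring; rewrite <- Hwv; ring).
    rewrite D12e in H.
    replace (N*(2 - 2*(a1x*a2x+a1y*a2y))*W*V) with ((2*N - 2*(N*(a1x*a2x+a1y*a2y)))*W*V) in H by ring.
    rewrite Dot in H. lra. }
  assert (WV: 0 < W*V) by (apply Rmult_lt_0_compat; auto).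
  apply (Rmult_eq_reg_l (N*(W*V))); [|apply Rmult_integral_contrapositive_currified; lra].
  replace (N*(W*V)*(wv^2/(W*V))) with (N*wv^2) by (field; lra).
  rewrite Key. field. lra.
Qed.


Lemma three_tangent ea eb x1 y1 x2 y2 x3 y3 qx qy :
  ea*x1*qx+eb*y1*qy = 1 -> ea*x2*qx+eb*y2*qy = 1 -> ea*x3*qx+eb*y3*qy = 1 ->
  (x2-x1)*(y3-y1)-(x3-x1)*(y2-y1) <> 0 -> False.
Proof.
  intros H1 H2 H3 HD.
  destruct (cramer x1 y1 x2 y2 x3 y3 (ea*qx) (eb*qy) (-1)) as [_ [_ H]]; auto; try lra.
Qed.

Lemma cross_nz D dj dk cx : D <> 0 -> D = dj*dk*cx -> cx <> 0.
Proof. intros H E C. rewrite C in E. apply H. rewrite E. ring. Qed.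

Lemma dist_eq x1 y1 x2 y2 : Defs.dist (x1,y1) (x2,y2) = sqrt((x1-x2)*(x1-x2)+(y1-y2)*(y1-y2)).
Proof. reflexivity. Qed.

Lemma sqrt_sym x1 y1 x2 y2 : sqrt((x1-x2)*(x1-x2)+(y1-y2)*(y1-y2)) = sqrt((x2-x1)*(x2-x1)+(y2-y1)*(y2-y1)).
Proof. f_equal. ring. Qed.

Lemma dpos x1 y1 x2 y2 : ~(x1 = x2 /\ y1 = y2) ->
  0 < sqrt((x2-x1)*(x2-x1)+(y2-y1)*(y2-y1)) /\
  sqrt((x2-x1)*(x2-x1)+(y2-y1)*(y2-y1)) * sqrt((x2-x1)*(x2-x1)+(y2-y1)*(y2-y1)) = (x2-x1)*(x2-x1)+(y2-y1)*(y2-y1).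
Proof.
  intro H. assert (0 < (x2-x1)*(x2-x1)+(y2-y1)*(y2-y1)).
  { pose proof (pos_quad 1 1 (x2-x1) (y2-y1) Rlt_0_1 Rlt_0_1). 
    assert (~(x2-x1 = 0 /\ y2-y1 = 0)) by (intros [A1 A2]; apply H; split; lra). specialize (H0 H1). lra. }
  split. apply sqrt_lt_R0; auto. apply sqrt_sqrt; lra.
Qed.

Lemma unit_of dx dy d : 0 < d -> d*d = dx*dx+dy*dy -> (dx/d)^2+(dy/d)^2 = 1.
Proof. intros Hd E. replace ((dx/d)^2+(dy/d)^2) with ((dx*dx+dy*dy)/(d*d)) by (field; lra). rewrite <- E. field. lra. Qed.

Lemma pt_neq (x1 y1 x2 y2 : R) : (x1,y1) <> (x2,y2) -> ~(x1 = x2 /\ y1 = y2).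
Proof. intros H [A1 A2]. subst. apply H. reflexivity. Qed.

Lemma pos_diff (qx qy px py : R) : ~(qx = px /\ qy = py) -> 0 < (qx-px)*(qx-px)+(qy-py)*(qy-py).
Proof.
  intro H. pose proof (pos_quad 1 1 (qx-px) (qy-py) Rlt_0_1 Rlt_0_1).
  assert (~(qx-px = 0 /\ qy-py = 0)) by (intros [A1 A2]; apply H; split; lra). specialize (H0 H1). lra.
Qed.

Lemma cos2_angle wx wy vx vy r : 0 < wx*wx+wy*wy -> 0 < vx*vx+vy*vy ->
  (wx*vx+wy*vy)^2/((wx*wx+wy*wy)*(vx*vx+vy*vy)) = r -> r <= 1 ->
  cos (2 * acos ((wx*vx+wy*vy)/(sqrt (wx*wx+wy*wy) * sqrt (vx*vx+vy*vy)))) = 2*r - 1.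
Proof.
  intros Hw Hv Hr Hr1.
  set (t := (wx*vx+wy*vy)/(sqrt (wx*wx+wy*wy) * sqrt (vx*vx+vy*vy))).
  assert (T2: t*t = r).
  { rewrite <- Hr. unfold t.
    pose proof (sqrt_sqrt (wx*wx+wy*wy)) as S1. pose proof (sqrt_sqrt (vx*vx+vy*vy)) as S2.
    pose proof (sqrt_lt_R0 _ Hw). pose proof (sqrt_lt_R0 _ Hv).
    replace ((wx*vx+wy*vy)^2/((wx*wx+wy*wy)*(vx*vx+vy*vy))) with
      ((wx*vx+wy*vy)^2/((sqrt (wx*wx+wy*wy) * sqrt (wx*wx+wy*wy))*(sqrt (vx*vx+vy*vy)*sqrt (vx*vx+vy*vy))))
      by (rewrite S1, S2; lra).
    field. split; lra. }
  assert (-1 <= t <= 1) by (split; nra).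
  rewrite cos_2a_cos. rewrite cos_acos by auto. lra.
Qed.


Lemma final_alg A B k c2 d : 0 < B -> B < A -> k^2 + 2*k*(A+B) + 3*A*B = 0 ->
  c2*(k*(A+B)+2*A*B) = k -> k <> 0 -> 3*B <= -k -> 0 <= d -> d^2 = A^2 - A*B + B^2 ->
  3 + 2*k*c2 = (A+B)*(A+B-2*d)/(A-B)^2.
Proof.
  intros HB HAB I3 JS Hk Hb Hd Hd2.
  assert (Sel: k + A + B + d = 0).
  { assert (F: (k+A+B - d)*(k+A+B+d) = 0).
    { replace ((k+A+B - d)*(k+A+B+d)) with ((k^2 + 2*k*(A+B) + 3*A*B) + (A^2 - A*B + B^2) - d^2) by ring.
      rewrite I3, Hd2. ring. }
    apply Rmult_integral in F. destruct F as [F|F]; [|exact F].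
    exfalso. assert (d = k + A + B) by lra.
    assert (d <= A - 2*B) by lra.
    assert (d^2 <= (A-2*B)^2) by nra.
    nra. }
  set (den := k*(A+B)+2*A*B) in *.
  assert (Hden: den <> 0).
  { intro H0. rewrite H0 in JS. apply Hk. rewrite <- JS. ring. }
  assert (HAB2: (A-B)^2 <> 0) by (apply pow_nonzero; lra).
  assert (C2: c2 = k/den) by (apply (Rmult_eq_reg_r den); [rewrite JS; field; auto | auto]).
  assert (P: (3*den + 2*k^2)*(A-B)^2 = ((A+B)*(A+B-2*d))*den).
  { replace d with (-(k+A+B)) by lra. unfold den.
    apply Rminus_diag_uniq.
    replace ((3 * (k * (A + B) + 2 * A * B) + 2 * k ^ 2) * (A - B) ^ 2 -
      (A + B) * (A + B - 2 * - (k + A + B)) * (k * (A + B) + 2 * A * B)) with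
      (-8*A*B*(k^2 + 2*k*(A+B) + 3*A*B)) by ring.
    rewrite I3. ring. }
  apply (Rmult_eq_reg_r ((A-B)^2*den)).
  2:{ apply Rmult_integral_contrapositive_currified; auto. }
  replace ((3 + 2*k*c2)*((A-B)^2*den)) with ((3*den + 2*k^2)*(A-B)^2) by (rewrite C2; field; auto).
  rewrite P. field. auto. lra.
Qed.

Lemma inv_bound ea eb x y : 0<ea -> ea<eb -> ea*x^2+eb*y^2=1 -> 0<ea^2*x^2+eb^2*y^2 ->
  /eb <= 1/(ea^2*x^2+eb^2*y^2).
Proof.
  intros Ha Hab E N.
  assert (ea^2*x^2+eb^2*y^2 <= eb).
  { assert (eb - (ea^2*x^2+eb^2*y^2) = eb*(ea*x^2+eb*y^2) - (ea^2*x^2+eb^2*y^2)) by (rewrite E; ring).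
    assert (eb*(ea*x^2+eb*y^2) - (ea^2*x^2+eb^2*y^2) = ea*x^2*(eb-ea)) by ring.
    assert (0 <= x^2) by nra. assert (0 <= ea*x^2*(eb-ea)) by (apply Rmult_le_pos; nra). lra. }
  unfold Rdiv. rewrite Rmult_1_l. apply Rinv_le_contravar; auto.
Qed.

Theorem mainTheorem10 :
  forall (a b : R) (P1 P2 P3 Q1 Q2 Q3 : pt),
    0 < b -> b < a ->
    three_periodic a b P1 P2 P3 ->
    on_tangent_line a b P2 Q1 -> on_tangent_line a b P3 Q1 ->
    on_tangent_line a b P3 Q2 -> on_tangent_line a b P1 Q2 ->
    on_tangent_line a b P1 Q3 -> on_tangent_line a b P2 Q3 ->
    let c := sqrt (a ^ 2 - b ^ 2) in
    let delta := sqrt (a ^ 4 - a ^ 2 * b ^ 2 + b ^ 4) in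
    let J := joachimsthal a b P1 P2 P3 in
    let L := perimeter P1 P2 P3 in
    let S := cos (2 * interior_angle Q1 Q2 Q3)
           + cos (2 * interior_angle Q2 Q3 Q1)
           + cos (2 * interior_angle Q3 Q1 Q2) in
    S = (a ^ 2 + b ^ 2) * (a ^ 2 + b ^ 2 - 2 * delta) / c ^ 4 /\
    S = 3 - J * L.
Proof.
  intros a b P1 P2 P3 Q1 Q2 Q3 Hb Hab HP T2Q1 T3Q1 T3Q2 T1Q2 T1Q3 T2Q3 cc delta J L S.
  destruct P1 as [x1 y1]. destruct P2 as [x2 y2]. destruct P3 as [x3 y3].
  destruct Q1 as [q1x q1y]. destruct Q2 as [q2x q2y]. destruct Q3 as [q3x q3y].
  destruct HP as [E1 [E2 [E3 [N12 [N23 [N31 [R1 [R2 R3]]]]]]]].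
  apply pt_neq in N12. apply pt_neq in N23. apply pt_neq in N31.
  assert (Ha: 0 < a) by lra.
  set (ea := / a^2). set (eb := / b^2).
  assert (Hea: 0 < ea) by (unfold ea; apply Rinv_0_lt_compat; apply pow_lt; lra).
  assert (Heb: 0 < eb) by (unfold eb; apply Rinv_0_lt_compat; apply pow_lt; lra).
  assert (Hab2: ea < eb).
  { unfold ea, eb. apply Rinv_lt_contravar. apply Rmult_lt_0_compat; apply pow_lt; lra.
    nra. }
  unfold on_ellipse, ell_f in E1, E2, E3. cbn [fst snd] in E1, E2, E3.
  assert (E1': ea*x1^2+eb*y1^2 = 1) by (rewrite <- E1; unfold ea, eb, Rdiv; ring).
  assert (E2': ea*x2^2+eb*y2^2 = 1) by (rewrite <- E2; unfold ea, eb, Rdiv; ring).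
  assert (E3': ea*x3^2+eb*y3^2 = 1) by (rewrite <- E3; unfold ea, eb, Rdiv; ring).
  unfold on_tangent_line in T2Q1, T3Q1, T3Q2, T1Q2, T1Q3, T2Q3. cbn [fst snd] in T2Q1, T3Q1, T3Q2, T1Q2, T1Q3, T2Q3.
  assert (t21: ea*x2*q1x+eb*y2*q1y = 1) by (rewrite <- T2Q1; unfold ea, eb, Rdiv; ring).
  assert (t31: ea*x3*q1x+eb*y3*q1y = 1) by (rewrite <- T3Q1; unfold ea, eb, Rdiv; ring).
  assert (t32: ea*x3*q2x+eb*y3*q2y = 1) by (rewrite <- T3Q2; unfold ea, eb, Rdiv; ring).
  assert (t12: ea*x1*q2x+eb*y1*q2y = 1) by (rewrite <- T1Q2; unfold ea, eb, Rdiv; ring).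
  assert (t13: ea*x1*q3x+eb*y1*q3y = 1) by (rewrite <- T1Q3; unfold ea, eb, Rdiv; ring).
  assert (t23: ea*x2*q3x+eb*y2*q3y = 1) by (rewrite <- T2Q3; unfold ea, eb, Rdiv; ring).
  clear T2Q1 T3Q1 T3Q2 T1Q2 T1Q3 T2Q3 E1 E2 E3.
  destruct (dpos x1 y1 x2 y2 N12) as [D12p D12s].
  destruct (dpos x2 y2 x3 y3 N23) as [D23p D23s].
  destruct (dpos x1 y1 x3 y3 ltac:(intros [A1 A2]; apply N31; split; auto)) as [D13p D13s].
  set (d12 := sqrt((x2-x1)*(x2-x1)+(y2-y1)*(y2-y1))) in *.
  set (d23 := sqrt((x3-x2)*(x3-x2)+(y3-y2)*(y3-y2))) in *.
  set (d13 := sqrt((x3-x1)*(x3-x1)+(y3-y1)*(y3-y1))) in *.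
  assert (dd21: Defs.dist (x2,y2) (x1,y1) = d12) by (rewrite dist_eq; reflexivity).
  assert (dd12: Defs.dist (x1,y1) (x2,y2) = d12) by (rewrite dist_eq, sqrt_sym; reflexivity).
  assert (dd32: Defs.dist (x3,y3) (x2,y2) = d23) by (rewrite dist_eq; reflexivity).
  assert (dd23: Defs.dist (x2,y2) (x3,y3) = d23) by (rewrite dist_eq, sqrt_sym; reflexivity).
  assert (dd31: Defs.dist (x3,y3) (x1,y1) = d13) by (rewrite dist_eq; reflexivity).
  assert (dd13: Defs.dist (x1,y1) (x3,y3) = d13) by (rewrite dist_eq, sqrt_sym; reflexivity).
  set (u12x := (x2-x1)/d12). set (u12y := (y2-y1)/d12).
  set (u13x := (x3-x1)/d13). set (u13y := (y3-y1)/d13).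
  set (u23x := (x3-x2)/d23). set (u23y := (y3-y2)/d23).
  assert (U12: u12x^2+u12y^2 = 1) by (apply unit_of; auto).
  assert (U13: u13x^2+u13y^2 = 1) by (apply unit_of; auto).
  assert (U23: u23x^2+u23y^2 = 1) by (apply unit_of; auto).
  assert (X12: x2 - x1 = d12*u12x) by (unfold u12x; field; lra).
  assert (Y12: y2 - y1 = d12*u12y) by (unfold u12y; field; lra).
  assert (X13: x3 - x1 = d13*u13x) by (unfold u13x; field; lra).
  assert (Y13: y3 - y1 = d13*u13y) by (unfold u13y; field; lra).
  assert (X23: x3 - x2 = d23*u23x) by (unfold u23x; field; lra).
  assert (Y23: y3 - y2 = d23*u23y) by (unfold u23y; field; lra).
  unfold billiard_reflection, udir, vadd, vscale, vsub, ell_tangent, dot in R1, R2, R3.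
  cbn [fst snd] in R1, R2, R3.
  rewrite dd31, dd21 in R1. rewrite dd12, dd32 in R2. rewrite dd23, dd13 in R3.
  assert (Rf1: (u12x+u13x)*(-eb*y1) + (u12y+u13y)*(ea*x1) = 0)
    by (rewrite <- R1; unfold u12x,u12y,u13x,u13y,ea,eb,Rdiv; ring).
  assert (Rf2: (-u12x+u23x)*(-eb*y2) + (-u12y+u23y)*(ea*x2) = 0)
    by (rewrite <- R2; unfold u12x,u12y,u23x,u23y,ea,eb,Rdiv; ring).
  assert (Rf3: (-u13x-u23x)*(-eb*y3) + (-u13y-u23y)*(ea*x3) = 0)
    by (rewrite <- R3; unfold u13x,u13y,u23x,u23y,ea,eb,Rdiv; ring).
  clear R1 R2 R3.
  assert (HD: (x2-x1)*(y3-y1)-(x3-x1)*(y2-y1) <> 0) by (apply (noncol ea eb); auto).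
  assert (C1: u12x*u13y - u12y*u13x <> 0).
  { apply (cross_nz _ d12 d13 _ HD). rewrite X12, Y12, X13, Y13. ring. }
  assert (C2: u23x*(-u12y) - u23y*(-u12x) <> 0).
  { apply (cross_nz _ d23 d12 _ HD).
    replace ((x2-x1)*(y3-y1)-(x3-x1)*(y2-y1)) with ((x2-x1)*(y3-y2)-(x3-x2)*(y2-y1)) by ring.
    rewrite X12, Y12, X23, Y23. ring. }
  assert (C3: (-u13x)*(-u23y) - (-u13y)*(-u23x) <> 0).
  { apply (cross_nz _ d13 d23 _ HD).
    replace ((x2-x1)*(y3-y1)-(x3-x1)*(y2-y1)) with ((x3-x1)*(y3-y2)-(x3-x2)*(y3-y1)) by ring.
    rewrite X13, Y13, X23, Y23. ring. }
  assert (X21: x1 - x2 = d12*(-u12x)) by (clear - X12; lra). assert (Y21: y1 - y2 = d12*(-u12y)) by (clear - Y12; lra).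
  assert (X31: x1 - x3 = d13*(-u13x)) by (clear - X13; lra). assert (Y31: y1 - y3 = d13*(-u13y)) by (clear - Y13; lra).
  assert (X32: x2 - x3 = d23*(-u23x)) by (clear - X23; lra). assert (Y32: y2 - y3 = d23*(-u23y)) by (clear - Y23; lra).
  assert (U21: (-u12x)^2+(-u12y)^2 = 1) by (rewrite <- U12; ring).
  assert (U31: (-u13x)^2+(-u13y)^2 = 1) by (rewrite <- U13; ring).
  assert (U32: (-u23x)^2+(-u23y)^2 = 1) by (rewrite <- U23; ring).
  assert (Rv2P: (u23x + -u12x)*(-eb*y2) + (u23y + -u12y)*(ea*x2) = 0) by (rewrite <- Rf2; ring).
  assert (Rv2J: (-u23x + -u13x)*(-eb*y3) + (-u23y + -u13y)*(ea*x3) = 0) by (rewrite <- Rf3; ring).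
  assert (Rv2K: (- -u12x - -u13x)*(-eb*y1) + (- -u12y - -u13y)*(ea*x1) = 0) by (rewrite <- Rf1; ring).
  assert (Rv3P: (-u13x + -u23x)*(-eb*y3) + (-u13y + -u23y)*(ea*x3) = 0) by (rewrite <- Rf3; ring).
  assert (Rv3J: (- -u13x + u12x)*(-eb*y1) + (- -u13y + u12y)*(ea*x1) = 0) by (rewrite <- Rf1; ring).
  assert (Rv3K: (- -u23x - u12x)*(-eb*y2) + (- -u23y - u12y)*(ea*x2) = 0) by (rewrite <- Rf2; ring).
  destruct (excenter ea eb x1 y1 x2 y2 x3 y3 q1x q1y d12 d13 d23 u12x u12y u13x u13y u23x u23y
    Hea Heb E1' E2' E3' D12p D13p D23p X12 Y12 X13 Y13 X23 Y23 U12 U13 U23 Rf1 Rf2 Rf3 C1 t21 t31)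
    as [k1 [K1x [K1y L1]]].
  destruct (excenter ea eb x2 y2 x3 y3 x1 y1 q2x q2y d23 d12 d13 u23x u23y (-u12x) (-u12y) (-u13x) (-u13y)
    Hea Heb E2' E3' E1' D23p D12p D13p X23 Y23 X21 Y21 X31 Y31 U23 U21 U31 Rv2P Rv2J Rv2K C2 t32 t12)
    as [k2 [K2x [K2y L2]]].
  destruct (excenter ea eb x3 y3 x1 y1 x2 y2 q3x q3y d13 d23 d12 (-u13x) (-u13y) (-u23x) (-u23y) u12x u12y
    Hea Heb E3' E1' E2' D13p D23p D12p X31 Y31 X32 Y32 X12 Y12 U31 U32 U12 Rv3P Rv3J Rv3K C3 t13 t23)
    as [k3 [K3x [K3y L3]]].
  assert (Qd12: 0 < (q2x-q1x)*(q2x-q1x)+(q2y-q1y)*(q2y-q1y)).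
  { apply pos_diff. intros [A1 A2]. apply (three_tangent ea eb x1 y1 x2 y2 x3 y3 q1x q1y); auto.
    rewrite <- A1, <- A2. exact t12. }
  assert (Qd13: 0 < (q3x-q1x)*(q3x-q1x)+(q3y-q1y)*(q3y-q1y)).
  { apply pos_diff. intros [A1 A2]. apply (three_tangent ea eb x1 y1 x2 y2 x3 y3 q1x q1y); auto.
    rewrite <- A1, <- A2. exact t13. }
  assert (Qd23: 0 < (q3x-q2x)*(q3x-q2x)+(q3y-q2y)*(q3y-q2y)).
  { apply pos_diff. intros [A1 A2]. apply (three_tangent ea eb x1 y1 x2 y2 x3 y3 q2x q2y); auto.
    rewrite <- A1, <- A2. exact t23. }
  assert (Qd21: 0 < (q1x-q2x)*(q1x-q2x)+(q1y-q2y)*(q1y-q2y)) by (clear - Qd12; nra).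
  assert (Qd31: 0 < (q1x-q3x)*(q1x-q3x)+(q1y-q3y)*(q1y-q3y)) by (clear - Qd13; nra).
  assert (Qd32: 0 < (q2x-q3x)*(q2x-q3x)+(q2y-q3y)*(q2y-q3y)) by (clear - Qd23; nra).
  assert (Wn1: (q2x-q1x)*(ea*x3)+(q2y-q1y)*(eb*y3) = 0) by (clear - t32 t31; lra).
  assert (Vn1: (q3x-q1x)*(ea*x2)+(q3y-q1y)*(eb*y2) = 0) by (clear - t23 t21; lra).
  assert (Wn2: (q3x-q2x)*(ea*x1)+(q3y-q2y)*(eb*y1) = 0) by (clear - t13 t12; lra).
  assert (Vn2: (q1x-q2x)*(ea*x3)+(q1y-q2y)*(eb*y3) = 0) by (clear - t31 t32; lra).
  assert (Wn3: (q1x-q3x)*(ea*x2)+(q1y-q3y)*(eb*y2) = 0) by (clear - t21 t23; lra).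
  assert (Vn3: (q2x-q3x)*(ea*x1)+(q2y-q3y)*(eb*y1) = 0) by (clear - t12 t13; lra).
  pose proof (angle_vertex ea eb x1 y1 x2 y2 x3 y3 d12 d13 d23 u12x u12y u13x u13y u23x u23y
    (q2x-q1x) (q2y-q1y) (q3x-q1x) (q3y-q1y)
    Hea Heb E1' E2' E3' D12p D13p D23p X12 Y12 X13 Y13 X23 Y23 U12 U13 U23 Rf1 Rf2 Rf3 C1 Wn1 Vn1 Qd12 Qd13) as AN1.
  pose proof (angle_vertex ea eb x2 y2 x3 y3 x1 y1 d23 d12 d13 u23x u23y (-u12x) (-u12y) (-u13x) (-u13y)
    (q3x-q2x) (q3y-q2y) (q1x-q2x) (q1y-q2y)
    Hea Heb E2' E3' E1' D23p D12p D13p X23 Y23 X21 Y21 X31 Y31 U23 U21 U31 Rv2P Rv2J Rv2K C2 Wn2 Vn2 Qd23 Qd21) as AN2.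
  pose proof (angle_vertex ea eb x3 y3 x1 y1 x2 y2 d13 d23 d12 (-u13x) (-u13y) (-u23x) (-u23y) u12x u12y
    (q1x-q3x) (q1y-q3y) (q2x-q3x) (q2y-q3y)
    Hea Heb E3' E1' E2' D13p D23p D12p X31 Y31 X32 Y32 X12 Y12 U31 U32 U12 Rv3P Rv3J Rv3K C3 Wn3 Vn3 Qd31 Qd32) as AN3.
  set (c := ea*x1*u12x+eb*y1*u12y) in *.
  destruct (vertex_J ea eb x1 y1 x2 y2 x3 y3 d12 d13 u12x u12y u13x u13y
    Hea Heb E1' E2' E3' D12p D13p X12 Y12 X13 Y13 U12 U13 Rf1) as [VJ1 Cneg].
  destruct (vertex_J ea eb x2 y2 x3 y3 x1 y1 d23 d12 u23x u23y (-u12x) (-u12y)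
    Hea Heb E2' E3' E1' D23p D12p X23 Y23 X21 Y21 U23 U21 Rv2P) as [VJ2 _].
  assert (Lk2: ea*x2*(-u12x)+eb*y2*(-u12y) = c).
  { apply (Rmult_eq_reg_l d12); [|apply Rgt_not_eq; exact D12p].
    assert (A1: d12*(ea*x2*(-u12x)+eb*y2*(-u12y)) = -(ea*x2*(x2-x1)+eb*y2*(y2-y1))) by (rewrite X12, Y12; ring).
    assert (A2: d12*(ea*x1*u12x+eb*y1*u12y) = ea*x1*(x2-x1)+eb*y1*(y2-y1)) by (rewrite X12, Y12; ring).
    assert (A3: -(ea*x2*(x2-x1)+eb*y2*(y2-y1)) = ea*x1*(x2-x1)+eb*y1*(y2-y1)) by (clear - E1' E2'; lra).
    unfold c. clear - A1 A2 A3. lra. }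
  assert (Lk3: ea*x3*(-u13x)+eb*y3*(-u13y) = c).
  { unfold c; rewrite VJ1. apply (Rmult_eq_reg_l d13); [|apply Rgt_not_eq; exact D13p].
    assert (A1: d13*(ea*x3*(-u13x)+eb*y3*(-u13y)) = -(ea*x3*(x3-x1)+eb*y3*(y3-y1))) by (rewrite X13, Y13; ring).
    assert (A2: d13*(ea*x1*u13x+eb*y1*u13y) = ea*x1*(x3-x1)+eb*y1*(y3-y1)) by (rewrite X13, Y13; ring).
    assert (A3: -(ea*x3*(x3-x1)+eb*y3*(y3-y1)) = ea*x1*(x3-x1)+eb*y1*(y3-y1)) by (clear - E1' E3'; lra).
    clear - A1 A2 A3. lra. }
  rewrite VJ2, Lk2 in L2. rewrite Lk3 in L3. rewrite VJ2, Lk2 in AN2. rewrite Lk3 in AN3.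
  assert (Cn: c < 0) by exact Cneg. assert (VJ1': c = ea*x1*u13x+eb*y1*u13y) by exact VJ1.
  clearbody c. clear Cneg VJ1.
  assert (k2 = k1) by (apply (Rmult_eq_reg_r c); [clear - L1 L2; lra | apply Rlt_not_eq; exact Cn]).
  assert (k3 = k1) by (apply (Rmult_eq_reg_r c); [clear - L1 L3; lra | apply Rlt_not_eq; exact Cn]).
  subst k2 k3. set (k := k1) in *.
  assert (Hk: k <> 0) by (intro HH; rewrite HH in L1; clear - L1 D12p D13p D23p; lra).
  rewrite K1x, K1y in t21, t31. rewrite K2x, K2y in t32.
  assert (G12: ea*x1*x2+eb*y1*y2 + k*(ea^2*x1*x2+eb^2*y1*y2) = 1) by (rewrite <- t21; ring).
  assert (G13: ea*x1*x3+eb*y1*y3 + k*(ea^2*x1*x3+eb^2*y1*y3) = 1) by (rewrite <- t31; ring).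
  assert (G23: ea*x2*x3+eb*y2*y3 + k*(ea^2*x2*x3+eb^2*y2*y3) = 1) by (rewrite <- t32; ring).
  destruct (frame ea eb k x1 y1 x2 y2 x3 y3) as [Fr I3]; auto.
  pose proof (Jsq ea eb k x1 y1 x3 y3 d13 u13x u13y) as JS.
  rewrite <- VJ1' in JS. specialize (JS Hea Heb E1' E3' D13p X13 Y13 U13 G13).
  pose proof (N_pos ea eb x1 y1 Hea Heb E1') as NP1.
  pose proof (N_pos ea eb x2 y2 Hea Heb E2') as NP2.
  pose proof (N_pos ea eb x3 y3 Hea Heb E3') as NP3.
  assert (NQ1: 0 < ea^2*x1^2+eb^2*y1^2) by (clear - NP1; nra).
  assert (NQ2: 0 < ea^2*x2^2+eb^2*y2^2) by (clear - NP2; nra).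
  assert (NQ3: 0 < ea^2*x3^2+eb^2*y3^2) by (clear - NP3; nra).
  assert (r1: 1 - c^2/(ea^2*x1^2+eb^2*y1^2) <= 1).
  { assert (0 <= c^2/(ea^2*x1^2+eb^2*y1^2)) by (unfold Rdiv; apply Rmult_le_pos; [clear; nra | left; apply Rinv_0_lt_compat; clear - NQ1; lra]). clear - H; lra. }
  assert (r2: 1 - c^2/(ea^2*x2^2+eb^2*y2^2) <= 1).
  { assert (0 <= c^2/(ea^2*x2^2+eb^2*y2^2)) by (unfold Rdiv; apply Rmult_le_pos; [clear; nra | left; apply Rinv_0_lt_compat; clear - NQ2; lra]). clear - H; lra. }
  assert (r3: 1 - c^2/(ea^2*x3^2+eb^2*y3^2) <= 1).
  { assert (0 <= c^2/(ea^2*x3^2+eb^2*y3^2)) by (unfold Rdiv; apply Rmult_le_pos; [clear; nra | left; apply Rinv_0_lt_compat; clear - NQ3; lra]). clear - H; lra. }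
  assert (HS: S = 3 + 2*k*c^2).
  { unfold S, interior_angle, norm, dot, vsub. cbn [fst snd].
    rewrite (cos2_angle _ _ _ _ _ Qd12 Qd13 AN1 r1).
    rewrite (cos2_angle _ _ _ _ _ Qd23 Qd21 AN2 r2).
    rewrite (cos2_angle _ _ _ _ _ Qd31 Qd32 AN3 r3).
    replace (2 * (1 - c ^ 2 / (ea ^ 2 * x1 ^ 2 + eb ^ 2 * y1 ^ 2)) - 1 +
      (2 * (1 - c ^ 2 / (ea ^ 2 * x2 ^ 2 + eb ^ 2 * y2 ^ 2)) - 1) +
      (2 * (1 - c ^ 2 / (ea ^ 2 * x3 ^ 2 + eb ^ 2 * y3 ^ 2)) - 1)) with
      (3 - 2*c^2*(1/(ea^2*x1^2+eb^2*y1^2) + 1/(ea^2*x2^2+eb^2*y2^2) + 1/(ea^2*x3^2+eb^2*y3^2)))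
      by (field; repeat split; clear - NQ1 NQ2 NQ3; lra).
    rewrite Fr. ring. }
  assert (HJ: J = -c).
  { unfold J, joachimsthal, ell_grad, udir, vscale, vsub, dot. cbn [fst snd].
    rewrite dd13. rewrite VJ1'. unfold u13x, u13y, ea, eb. field. repeat split; clear - Hb Hab D13p; lra. }
  assert (HL: L = 2*k*c).
  { unfold L, perimeter. rewrite dd12, dd23, dd31. clear - L1. lra. }
  split.
  - rewrite HS.
    assert (Hcc: cc^4 = (a^2-b^2)^2).
    { unfold cc. replace (sqrt (a^2-b^2) ^ 4) with ((sqrt (a^2-b^2) * sqrt (a^2-b^2))^2) by ring.
      rewrite sqrt_sqrt. reflexivity. clear - Hb Hab. nra. }
    rewrite Hcc.
    apply (final_alg (a^2) (b^2) k (c^2) delta).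
    + clear - Hb. nra.
    + clear - Hb Hab. nra.
    + assert (EE: (a^2*b^2)*(k^2*ea*eb + 2*k*(ea+eb)+3) = k^2 + 2*k*(a^2+b^2) + 3*a^2*b^2)
        by (unfold ea, eb; field; split; clear - Hb Hab; lra).
      rewrite <- EE, I3. ring.
    + assert (EE: a^2*b^2*(c^2*(k*(ea+eb)+2)) = c^2*(k*(a^2+b^2)+2*a^2*b^2))
        by (unfold ea, eb; field; split; clear - Hb Hab; lra).
      assert (EE2: a^2*b^2*(k*ea*eb) = k) by (unfold ea, eb; field; split; clear - Hb Hab; lra).
      rewrite <- EE, JS. exact EE2.
    + exact Hk.
    + pose proof (inv_bound ea eb x1 y1 Hea Hab2 E1' NQ1).
      pose proof (inv_bound ea eb x2 y2 Hea Hab2 E2' NQ2).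
      pose proof (inv_bound ea eb x3 y3 Hea Hab2 E3' NQ3).
      assert (IB: /eb = b^2) by (unfold eb; field; clear - Hb; lra).
      clear - H H0 H1 IB Fr. lra.
    + unfold delta. apply sqrt_pos.
    + unfold delta. rewrite <- Rsqr_pow2. rewrite Rsqr_sqrt. ring. clear - Hb Hab. nra.
  - rewrite HS, HJ, HL. ring.
Qed.
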